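(* Let $X$ be the Markov process on the star graph $\Gamma$ generated by the operator $(L,D(L))$ described in the context, for some finite stickiness parameter $\eta\ge 0$. Then the vertex $\mathsf v$ is not a trap for $X$, i.e. it is not true that $\mathbf P_{\mathsf v}(\xi_{\mathsf v}>t)=1$ for every $t>0$, where $\xi_{\mathsf v}:=\inf\{s>0: X(s)\neq \mathsf v\}$.
   Context: Star graph: fix $N\ge1$. $\Gamma$ is the quotient of the disjoint union of $N$ copies of $[0,\infty)$ obtained by identifying all the origins; points are written $(i,x)$ with $i\in\{1,\dots,N\}$, $x\ge 0$, and $\mathsf v=(\cdot,0)$ is the unique vertex. $\Gamma$ carries the metric $d((j,x),(i,y))=|x-y|$ if $i=j$ and $x+y$ if $i\ne j$. A function $f:\Gamma\to\mathbb R$ is identified with $(f_1,\dots,f_N)$, $f_i(x)=f(i,x)$, with $f_i(0)=f_j(0)$ for all $i,j$; derivatives are taken edgewise (one-sided at $0$, not required to agree across edges). $C_0(\Gamma)$: continuous functions on $\Gamma$ vanishing at infinity on each edge. $C^2(\Gamma)$: continuous $f$ on $\Gamma$ with each $f_i\in C^2([0,\infty))$. $PC(\Gamma)$: functions whose restrictions $f_i$ are bounded and continuous on $(0,\infty)$ and extend continuously to $[0,\infty)$. Coefficients: $\sigma,b\in PC(\Gamma)$ with $\sigma>\sigma_0$ on $\Gamma$ for some constant $\sigma_0>0$. Operator: $Lf(i,x)=\frac12\sigma_i^2(x)f_i''(x)+b_i(x)f_i'(x)$ for $x>0$; when the limits $\lim_{x\to0}L_if(x)$ coincide for all $i$, $Lf(\mathsf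 v)$ denotes this common value. Fix $\eta\ge0$ and $\rho_1,\dots,\rho_N>0$ with $\sum_i\rho_i=1$, and set $D(L)=\{f\in C^2(\Gamma)\cap C_0(\Gamma): Lf\in C_0(\Gamma),\ \eta Lf(\mathsf v)=\sum_{i=1}^N\rho_if_i'(0)\}$. It is known that $(L,D(L))$ generates a strongly continuous semigroup on $C_0(\Gamma)$ associated with a conservative Markov process $X(t)=(i(t),x(t))$ on $\Gamma$ with continuous paths; $\mathbf P_{\mathsf x},\mathbf E_{\mathsf x}$ denote probability and expectation for the process started at $\mathsf x$. *)

(* Defs.v *)
From HB Require Import structures.
From mathcomp Require Import all_boot all_order all_algebra.
From mathcomp Require Import all_classical all_reals all_analysis.
Set Implicit Arguments. Unset Strict Implicit. Unset Printing Implicit Defensive.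
Import Order.TTheory GRing.Theory Num.Theory.
Import numFieldNormedType.Exports.
Local Open Scope classical_set_scope.
Local Open Scope ring_scope.

Section StarGraph.
Variables (R : realType) (n : nat).
(* The star graph with N = n.+1 edges, indexed by 'I_n.+1.  A point is a pair
   (i, x) with x >= 0; the vertex is represented uniquely by (ord0, 0),
   which realises the identification of all origins. *)
Definition gpred : pred ('I_n.+1 * R) :=
  fun p => (0 <= p.2) && ((p.2 == 0) ==> (p.1 == ord0)).
Definition Gamma := {p : 'I_n.+1 * R | gpred p}.

Lemma vtx_proof : gpred (ord0, 0).
Proof. by rewrite /gpred /= lexx eqxx. Qed.
Definition vtx : Gamma := exist _ (ord0, 0) vtx_proof.

(* the point (i,x); for x <= 0 this is the vertex *)
Definition gpoint (i : 'I_n.+1) (x : R) : Gamma := insubd vtx (i, x).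

Definition edge (f : Gamma -> R) (i : 'I_n.+1) : R -> R := fun x => f (gpoint i x).

(* coordinate maps: coord i p = x if p = (i,x), 0 otherwise; together they
   embed Gamma homeomorphically in R^N *)
Definition coord (i : 'I_n.+1) (p : Gamma) : R :=
  if (sval p).1 == i then (sval p).2 else 0.

Definition C0 (f : Gamma -> R) : Prop :=
  forall i, {within `[0, +oo[, continuous (edge f i)} /\
            (edge f i @ +oo --> 0).

Definition rderiv0 (g : R -> R) : R := lim ((fun h => (g h - g 0) / h) @ 0^'+).

Definition C2e (g : R -> R) : Prop :=
  [/\ (forall x, 0 < x -> derivable g x 1),
      (forall x, 0 < x -> derivable (derive1 g) x 1) &
      {in `]0, +oo[, continuous (derive1 (derive1 g))}] /\
  [/\ g @ 0^'+ --> g 0,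
      cvg ((derive1 g) @ 0^'+), cvg (derive1 (derive1 g) @ 0^'+) &
      cvg ((fun h => (g h - g 0) / h) @ 0^'+)].

Definition C2 (f : Gamma -> R) : Prop := forall i, C2e (edge f i).

Definition PC (c : 'I_n.+1 -> R -> R) : Prop :=
  forall i, [/\ exists M, forall x, 0 < x -> `|c i x| <= M,
                {in `]0, +oo[, continuous (c i)} &
                cvg (c i @ 0^'+)].

Definition Li (sig b : 'I_n.+1 -> R -> R) (f : Gamma -> R) (i : 'I_n.+1)
  (x : R) : R :=
  2^-1 * (sig i x) ^+ 2 * derive1 (derive1 (edge f i)) x + b i x * derive1 (edge f i) x.

(* Lf as a function on Gamma; at the vertex, Lf(v) := lim_{x->0+} L_0 f(x)
   (when Lf is in C_0 all the edge limits coincide with it) *)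
Definition Lop (sig b : 'I_n.+1 -> R -> R) (f : Gamma -> R) (p : Gamma) : R :=
  if 0 < (sval p).2 then Li sig b f (sval p).1 (sval p).2
  else lim (Li sig b f ord0 @ 0^'+).

Definition DL (sig b : 'I_n.+1 -> R -> R) (eta : R) (rho : 'I_n.+1 -> R)
  (f : Gamma -> R) : Prop :=
  [/\ C2 f, C0 f, C0 (Lop sig b f) &
      eta * Lop sig b f vtx = \sum_i rho i * rderiv0 (edge f i)].

Variables (d : measure_display) (Omega : measurableType d).

Definition Tsg (P : Gamma -> probability Omega R) (X : Omega -> R -> Gamma)
  (t : R) (f : Gamma -> R) (x : Gamma) : R :=
  fine (\int[P x]_w (f (X w t))%:E)%E.

Definition gen_lim (T : R -> (Gamma -> R) -> Gamma -> R) (f g : Gamma -> R) :=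
  forall e : R, 0 < e ->
    \forall t \near 0^'+, forall p, `|(T t f p - f p) / t - g p| < e.

Definition generated_process (sig b : 'I_n.+1 -> R -> R) (eta : R)
  (rho : 'I_n.+1 -> R) (P : Gamma -> probability Omega R)
  (X : Omega -> R -> Gamma) : Prop :=
  [/\
      (forall t i, measurable_fun setT (fun w => coord i (X w t))),
      (forall w i, {within `[0, +oo[, continuous (fun t => coord i (X w t))}),
      (forall x, P x [set w | X w 0 = x] = 1%E) &
      (* Markov property (finite-dimensional form, natural filtration) *)
      (forall x (gs : seq (R * (Gamma -> R))) s t f,
          0 <= s -> 0 <= t -> C0 f ->
          all (fun q => (0 <= q.1) && (q.1 <= s)) gs ->
          (forall q, q \in gs -> C0 q.2) ->
          (\int[P x]_w (((\prod_(q <- gs) q.2 (X w q.1)) * f (X w (s + t)))%R)%:E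
           = \int[P x]_w (((\prod_(q <- gs) q.2 (X w q.1))
                           * Tsg P X t f (X w s))%R)%:E)%E)] /\
  [/\
      (forall t f, 0 <= t -> C0 f -> C0 (Tsg P X t f)),
      (forall f, C0 f -> forall e : R, 0 < e ->
          \forall t \near 0^'+, forall p, `|Tsg P X t f p - f p| < e) &
      ((forall f, C0 f ->
          (DL sig b eta rho f <-> exists g, C0 g /\ gen_lim (Tsg P X) f g)) /\
       (forall f, DL sig b eta rho f -> gen_lim (Tsg P X) f (Lop sig b f)))].

Definition xi_v (X : Omega -> R -> Gamma) (w : Omega) : \bar R :=
  ereal_inf [set (s%:E)%E | s in [set s : R | 0 < s /\ X w s <> vtx]].

End StarGraph.

(* Main.v *)
Require Import Defs.
From HB Require Import structures.
From mathcomp Require Import all_boot all_order all_algebra.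
From mathcomp Require Import all_classical all_reals all_analysis.
From mathcomp Require Import ring lra.
From mathcomp Require Import measurable_realfun.
Import Order.TTheory GRing.Theory Num.Theory.
Import numFieldNormedType.Exports.
Local Open Scope classical_set_scope.
Local Open Scope ring_scope.

Section Aux.
Variable R : realType.
Definition u (x : R) := (x + 1)^-1.

Lemma is_derive_u (x : R) : -1 < x -> is_derive x 1 u (- u x ^+ 2).
Proof.
move=> hx.
have h1 : is_derive x (1:R) (fun y : R => y + 1) 1 := is_derive_shift x 1 1.
have nz : x + 1 != 0 by rewrite gt_eqF // -ltrBlDr sub0r.
have := @is_deriveV R (fun y => y + 1) x 1 1 nz h1.
move=> H. rewrite /u. apply: is_derive_eq H _.
by rewrite -exprVn [_%:A]mulr1.
Qed.

Lemma is_derive_upow (m : nat) (x : R) : -1 < x ->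
  is_derive x 1 (fun y => u y ^+ m) (- m%:R * u x ^+ m.+1).
Proof.
move=> hx; have := is_deriveX m (is_derive_u x hx).
rewrite exprfctE => H; apply: is_derive_eq H _.
rewrite -[_ *: _]/(_ * _).
case: m => [|m]; first by rewrite !mul0r oppr0 mul0r.
rewrite /= !exprSr. ring.
Qed.

Definition F (a b c : R) (p q r : nat) (y : R) := a * u y ^+ p + (b * u y ^+ q + c * u y ^+ r).
Definition dc (a : R) (p : nat) := a * - p%:R.

Lemma u_cvgy : u x @[x --> +oo] --> (0:R).
Proof.
rewrite /u; apply/gtr0_cvgV0; last exact: cvg_addrr.
by exists 0; split; [rewrite num_real| move=> y /= hy; lra].
Qed.

Lemma is_derive_lin (a : R) {f g : R -> R} {x df dg : R} :
  is_derive x (1:R) f df -> is_derive x (1:R) g dg ->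
  is_derive x (1:R) (fun y => a * f y + g y) (a * df + dg).
Proof.
move=> hf hg; have := is_deriveD (is_deriveZ a hf) hg. done.
Qed.
Arguments is_derive_upow m {x}.

Lemma is_derive_F (a b c : R) (p q r : nat) (x : R) : -1 < x ->
  is_derive x 1 (F a b c p q r) (F (dc a p) (dc b q) (dc c r) p.+1 q.+1 r.+1 x).
Proof.
move=> hx.
have H := is_derive_lin a (is_derive_upow p hx) (is_derive_lin b (is_derive_upow q hx) (is_deriveZ c (is_derive_upow r hx))).
apply: is_derive_eq H _. rewrite /F /dc -[c *: _]/(c * _). ring.
Qed.

Lemma upow_cvgy (p : nat) : (fun y => u y ^+ p) @ +oo --> (0:R) ^+ p.
Proof.
elim: p => [|p IH]; first by rewrite expr0; under eq_fun do rewrite expr0; exact: cvg_cst.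
under eq_fun do rewrite exprS. rewrite exprS.
by apply: cvgM => //; exact: u_cvgy.
Qed.

Lemma F_cvgy (a b c : R) (p q r : nat) :
  F a b c p q r @ +oo --> a * 0 ^+ p + (b * 0 ^+ q + c * 0 ^+ r).
Proof.
apply: cvgD; first by apply: cvgM; [exact: cvg_cst|exact: upow_cvgy].
apply: cvgD; by apply: cvgM; [exact: cvg_cst|exact: upow_cvgy].
Qed.

Lemma F_cont (a b c : R) (p q r : nat) (x : R) : -1 < x -> {for x, continuous (F a b c p q r)}.
Proof.
move=> hx; apply: differentiable_continuous; apply/derivable1_diffP.
by case: (is_derive_F a b c p q r x hx).
Qed.

Lemma F0 (a b c : R) (p q r : nat) : F a b c p q r 0 = a + (b + c).
Proof. rewrite /F /u.
have -> : (0 + 1)^-1 = 1 :> R by rewrite add0r invr1.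
by rewrite !expr1n !mulr1.
Qed.
Section Edge.
Variables (a b c : R) (g : R -> R).
Hypothesis gF : forall x : R, 0 < x -> g x = F a b c 1 2 3 x.
Hypothesis g0 : g 0 = 0.
Hypothesis abc : a + (b + c) = 0.
Definition d1 := F (dc a 1) (dc b 2) (dc c 3) 2 3 4.
Definition d2 := F (dc (dc a 1) 2) (dc (dc b 2) 3) (dc (dc c 3) 4) 3 4 5.
Lemma gtN1 (x : R) : 0 < x -> -1 < x.
Proof. by move=> hx; apply: lt_trans hx; rewrite ltrN10. Qed.
Lemma g_near (x : R) : 0 < x -> \forall y \near x, g y = F a b c 1 2 3 y.
Proof. move=> hx; near=> y; apply: gF; near: y; exact: lt_nbhsr. Unshelve. all: by end_near. Qed.
Lemma g_d1 (x : R) : 0 < x -> derive1 g x = d1 x.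
Proof.
move=> hx; rewrite derive1E (near_eq_derive _ (g_near x hx)).
by case: (is_derive_F a b c 1 2 3 x (gtN1 x hx)) => _ ->.
Qed.
Lemma d1_near (x : R) : 0 < x -> \forall y \near x, derive1 g y = d1 y.
Proof. move=> hx; near=> y; apply: g_d1; near: y; exact: lt_nbhsr. Unshelve. all: by end_near. Qed.
Lemma g_d2 (x : R) : 0 < x -> derive1 (derive1 g) x = d2 x.
Proof.
move=> hx; rewrite derive1E (near_eq_derive _ (d1_near x hx)).
by case: (is_derive_F (dc a 1) (dc b 2) (dc c 3) 2 3 4 x (gtN1 x hx)) => _ ->.
Qed.
Lemma near_right_cvg (h k : R -> R) (l : R) :
  (\forall y \near 0^'+, h y = k y) -> k @ (0:R) --> l -> h @ 0^'+ --> l.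
Proof.
move=> hk kl; apply: cvg_trans (cvg_at_right_filter kl).
apply: near_eq_cvg; by apply: filterS hk => y ->.
Qed.
Lemma g_right : \forall y \near (0:R)^'+, g y = F a b c 1 2 3 y.
Proof. near=> y; apply: gF; near: y; exact: nbhs_right_gt. Unshelve. all: by end_near. Qed.
Lemma d1_right : \forall y \near (0:R)^'+, derive1 g y = d1 y.
Proof. near=> y; apply: g_d1; near: y; exact: nbhs_right_gt. Unshelve. all: by end_near. Qed.
Lemma d2_right : \forall y \near (0:R)^'+, derive1 (derive1 g) y = d2 y.
Proof. near=> y; apply: g_d2; near: y; exact: nbhs_right_gt. Unshelve. all: by end_near. Qed.
Lemma gtN10 : -1 < (0:R). Proof. by rewrite ltrN10. Qed.
Lemma g_cvg0 : g @ 0^'+ --> g 0.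
Proof. have -> : g 0 = F a b c 1 2 3 0 by rewrite F0 abc g0.
apply: (near_right_cvg _ _ _ g_right). exact: F_cont gtN10. Qed.
Lemma d1_cvg0 : derive1 g @ 0^'+ --> d1 0.
Proof. apply: (near_right_cvg _ _ _ d1_right). exact: F_cont gtN10. Qed.
Lemma d2_cvg0 : derive1 (derive1 g) @ 0^'+ --> d2 0.
Proof. apply: (near_right_cvg _ _ _ d2_right). exact: F_cont gtN10. Qed.
Lemma quot_cvg0 : (fun h => (g h - g 0) / h) @ 0^'+ --> d1 0.
Proof.
have [dF dFv] := is_derive_F a b c 1 2 3 0 gtN10.
have := cvg_dnbhs_at_right dF.
rewrite (_ : lim _ = d1 0); last exact: dFv.
move=> H; apply: cvg_trans H; apply: near_eq_cvg.
near=> h. rewrite /= g0 gF; last by near: h; exact: nbhs_right_gt.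
have -> : F a b c 1 2 3 0 = 0 by rewrite F0 abc.
by rewrite [h%:A]mulr1 addr0 mulrC.
Unshelve. all: by end_near. Qed.
Lemma g_C2e : C2e g.
Proof.
split; split.
- move=> x hx; apply: (near_eq_derivable (f := F a b c 1 2 3)).
    by apply: filterS (g_near x hx) => y ->.
  by case: (is_derive_F a b c 1 2 3 x (gtN1 x hx)).
- move=> x hx; apply: (near_eq_derivable (f := d1)).
    by apply: filterS (d1_near x hx) => y ->.
  by case: (is_derive_F (dc a 1) (dc b 2) (dc c 3) 2 3 4 x (gtN1 x hx)).
- move=> x; rewrite in_itv /= andbT => hx.
  rewrite /continuous_at (g_d2 x hx).
  apply: cvg_trans (F_cont _ _ _ 3 4 5 x (gtN1 x hx)).
  apply: near_eq_cvg; near=> y; apply/esym; apply: g_d2; near: y; exact: lt_nbhsr.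
- exact: g_cvg0.
- by apply/cvg_ex; exists (d1 0); exact: d1_cvg0.
- by apply/cvg_ex; exists (d2 0); exact: d2_cvg0.
- by apply/cvg_ex; exists (d1 0); exact: quot_cvg0.
Unshelve. all: by end_near. Qed.
Lemma rderiv0_g : rderiv0 g = d1 0.
Proof. exact: cvg_lim quot_cvg0. Qed.
Lemma near_y_cvg (h k : R -> R) (l : R) :
  (forall y, 0 < y -> h y = k y) -> k @ +oo --> l -> h @ +oo --> l.
Proof.
move=> hk kl; apply: cvg_trans kl; apply: near_eq_cvg.
exists 0; split; first by rewrite num_real.
by move=> y /= hy; rewrite hk.
Qed.
Lemma g_cvgy : g @ +oo --> 0.
Proof.
apply: (near_y_cvg _ _ _ gF).
have := F_cvgy a b c 1 2 3. by rewrite !expr0n /= !mulr0 !addr0.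
Qed.
Lemma d1g_cvgy : derive1 g @ +oo --> 0.
Proof.
apply: (near_y_cvg _ _ _ g_d1).
have := F_cvgy (dc a 1) (dc b 2) (dc c 3) 2 3 4. by rewrite !expr0n /= !mulr0 !addr0.
Qed.
Lemma d2g_cvgy : derive1 (derive1 g) @ +oo --> 0.
Proof.
apply: (near_y_cvg _ _ _ g_d2).
have := F_cvgy (dc (dc a 1) 2) (dc (dc b 2) 3) (dc (dc c 3) 4) 3 4 5. by rewrite !expr0n /= !mulr0 !addr0.
Qed.
Lemma g_within : {within `[0, +oo[, continuous g}.
Proof.
apply/continuous_within_itvcyP; split; last exact: g_cvg0.
move=> x; rewrite in_itv /= andbT => hx.
rewrite /continuous_at (gF x hx).
apply: cvg_trans (F_cont _ _ _ 1 2 3 x (gtN1 x hx)).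
apply: near_eq_cvg; near=> y; apply/esym; apply: gF; near: y; exact: lt_nbhsr.
Unshelve. all: by end_near. Qed.
Lemma ygt0 : \forall y \near +oo, 0 < (y : R).
Proof. by exists 0; split; [rewrite num_real|]. Qed.
Lemma bnd_cvg0 (h k : R -> R) (M : R) :
  (forall y, 0 < y -> `|h y| <= M) -> k @ +oo --> 0 -> (fun y => h y * k y) @ +oo --> 0.
Proof.
move=> hM /cvgr0Pnorm_lt kc; apply/cvgr0Pnorm_lt => e e0.
have M1 : 0 < `|M| + 1 by rewrite ltr_wpDl.
have K := kc (e / (`|M|+1)) (divr_gt0 e0 M1).
near=> y.
have y0 : 0 < y by near: y; exact: ygt0.
have ky : `|k y| < e / (`|M| + 1) by near: y.
rewrite normrM.
have h1 : `|h y| <= `|M| + 1 by apply: le_trans (hM y y0) _; apply: le_trans (ler_norm M) _; rewrite lerDl.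
apply: (le_lt_trans (ler_wpM2r (normr_ge0 _) h1)).
by rewrite mulrC -ltr_pdivlMr.
Unshelve. all: by end_near. Qed.
Lemma Lg_cvg0 (sg bb : R -> R) (s be : R) : sg @ 0^'+ --> s -> bb @ 0^'+ --> be ->
  (fun y => 2^-1 * sg y ^+ 2 * derive1 (derive1 g) y + bb y * derive1 g y) @ 0^'+
    --> 2^-1 * s ^+ 2 * d2 0 + be * d1 0.
Proof.
move=> hs hb.
have hs2 : (fun y => sg y ^+ 2) @ 0^'+ --> s ^+ 2 by exact: cvgM.
apply: cvgD; last exact: cvgM hb d1_cvg0.
apply: cvgM; last exact: d2_cvg0.
apply: cvgM => //; exact: cvg_cst.
Qed.
Lemma Lg_cont (sg bb : R -> R) : {in `]0, +oo[, continuous sg} -> {in `]0, +oo[, continuous bb} ->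
  {in `]0, +oo[, continuous (fun y => 2^-1 * sg y ^+ 2 * derive1 (derive1 g) y + bb y * derive1 g y)}.
Proof.
move=> cs cb x hx0; have hx : 0 < x by move: hx0; rewrite in_itv /= andbT.
have c2 : derive1 (derive1 g) @ x --> derive1 (derive1 g) x.
  by case: g_C2e => -[_ _ C] _; exact: C.
have c1 : derive1 g @ x --> derive1 g x.
  rewrite (g_d1 x hx).
  apply: cvg_trans (F_cont _ _ _ 2 3 4 x (gtN1 x hx)).
  apply: near_eq_cvg; near=> y; apply/esym; apply: g_d1; near: y; exact: lt_nbhsr.
have hs2 : (fun y => sg y ^+ 2) @ x --> sg x ^+ 2 by apply: cvgM; exact: cs.
rewrite /continuous_at.
apply: cvgD; last by apply: cvgM; [exact: cb|exact: c1].
apply: cvgM; last exact: c2.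
apply: cvgM => //; exact: cvg_cst.
Unshelve. all: by end_near. Qed.
Lemma Lg_cvgy (sg bb : R -> R) (M1 M2 : R) :
  (forall y, 0 < y -> `|sg y| <= M1) -> (forall y, 0 < y -> `|bb y| <= M2) ->
  (fun y => 2^-1 * sg y ^+ 2 * derive1 (derive1 g) y + bb y * derive1 g y) @ +oo --> 0.
Proof.
move=> h1 h2; suff : (fun y => 2^-1 * sg y ^+ 2 * derive1 (derive1 g) y + bb y * derive1 g y) @ +oo --> 0 + 0 by rewrite addr0.
apply: cvgD; last exact: (bnd_cvg0 _ _ M2 h2 d1g_cvgy).
apply: (bnd_cvg0 _ _ (2^-1 * M1 ^+ 2)) ; last exact: d2g_cvgy.
move=> y y0; rewrite normrM normrX ger0_norm ?invr_ge0 ?ler0n //.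
apply: ler_wpM2l; first by rewrite invr_ge0 ler0n.
apply: lerXn2r; [exact: normr_ge0|exact: le_trans (normr_ge0 _) (h1 y y0)| exact: h1].
Qed.
End Edge.
Section G.
Variable n : nat.
Lemma gpoint_val (i : 'I_n.+1) (x : R) : sval (gpoint i x) = if 0 < x then (i, x) else (ord0, 0).
Proof.
rewrite /gpoint val_insubd /gpred /=.
case: (ltgtP x 0) => [hx|hx|->].
- by [].
- by [].
- by rewrite /=; case: eqP => // ->.
Qed.
Variables (C1 C2 C3 : 'I_n.+1 -> R).
Hypothesis Csum : forall i, C1 i + (C2 i + C3 i) = 0.
Definition fG (p : Gamma R n) : R := F (C1 (sval p).1) (C2 (sval p).1) (C3 (sval p).1) 1 2 3 (sval p).2.
Lemma edge_fG (i : 'I_n.+1) (x : R) : edge fG i x = if 0 < x then F (C1 i) (C2 i) (C3 i) 1 2 3 x else 0.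
Proof. by rewrite /edge /fG gpoint_val; case: ifP => //= _; rewrite F0 Csum. Qed.
Lemma coord_ge0 (j : 'I_n.+1) (p : Gamma R n) : 0 <= Defs.coord j p.
Proof. rewrite /Defs.coord; case: ifP => // _; case: p => -[i x] /= /andP[] //. Qed.
Lemma fG_sum (p : Gamma R n) : fG p = \sum_j F (C1 j) (C2 j) (C3 j) 1 2 3 (Defs.coord j p).
Proof.
rewrite (bigD1 (sval p).1) //= big1 ?addr0.
  by rewrite /Defs.coord eqxx.
move=> j hj; rewrite /Defs.coord; case: eqP => [e|_]; first by rewrite e eqxx in hj.
by rewrite F0 Csum.
Qed.
Lemma Fabs_cont (a b c : R) : continuous (fun x : R => F a b c 1 2 3 `|x|).
Proof.
move=> x; apply: (@continuous_comp _ _ _ (fun x : R => `|x|) (F a b c 1 2 3)).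
  exact: norm_continuous.
apply: F_cont; apply: lt_le_trans (normr_ge0 _); exact: gtN10.
Qed.
Lemma fG_meas d (Omega : measurableType d) (Y : Omega -> Gamma R n) :
  (forall i, measurable_fun setT (fun w => Defs.coord i (Y w))) ->
  measurable_fun setT (fun w => fG (Y w)).
Proof.
move=> hY.
rewrite (_ : (fun w => fG (Y w)) = (fun w => \sum_j F (C1 j) (C2 j) (C3 j) 1 2 3 `|Defs.coord j (Y w)|)).
  apply: measurable_sum => j.
  exact: measurableT_comp (measurable_realfun.continuous_measurable_fun (Fabs_cont _ _ _)) (hY j).
apply/funext => w; rewrite fG_sum; apply: eq_bigr => j _.
by rewrite ger0_norm // coord_ge0.
Qed.
Lemma vtx_coord (p : Gamma R n) : p = vtx R n <-> forall i, Defs.coord i p = 0.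
Proof.
split=> [-> i|H]; first by rewrite /Defs.coord /=; case: ifP.
have h2 : (sval p).2 = 0 by have := H (sval p).1; rewrite /Defs.coord eqxx.
apply: val_inj => /=.
case: p H h2 => -[i x] /= /andP[_ hi] _ hx; move: hi; rewrite hx eqxx /= => /eqP ->.
by [].
Qed.
Lemma rat_near (s : R) (P : R -> Prop) : (\forall y \near s, P y) -> exists r : rat, P (ratr r).
Proof.
move=> /nbhs_ballP [e e0 He].
have [r hr] : exists r : rat, ratr r \in `]s, s + e[ by apply: rat_in_itvoo; rewrite ltrDl.
exists r; apply: He; move: hr; rewrite in_itv /= => /andP[h1 h2].
rewrite /ball /=.
rewrite distrC ger0_norm; last by rewrite subr_ge0 ltW.
by rewrite ltrBlDl.
Qed.
Lemma path_vtx (Y : R -> Gamma R n) (q : R) :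
  (forall i, {within `[0, +oo[, continuous (fun t => Defs.coord i (Y t))}) ->
  (forall r : rat, 0 < (ratr r : R) < q -> Y (ratr r) = vtx R n) ->
  forall s, 0 < s < q -> Y s = vtx R n.
Proof.
move=> hc hr s /andP[s0 sq]; apply/vtx_coord => i.
have /continuous_within_itvcyP[ci _] := hc i.
have cs : (fun t => Defs.coord i (Y t)) @ s --> Defs.coord i (Y s).
  by apply: ci; rewrite in_itv /= s0.
apply/eqP/negPn/negP => hne.
have e0 : 0 < `|Defs.coord i (Y s)| by rewrite normr_gt0.
have := (cvgrPdist_lt _ _).1 cs _ e0.
move=> Hn.
have Hq : \forall y \near s, [/\ `|Defs.coord i (Y s) - Defs.coord i (Y y)| < `|Defs.coord i (Y s)|, 0 < y & y < q].
  near=> y; split; [by near: y; apply: Hn | by near: y; exact: lt_nbhsr | by near: y; exact: lt_nbhsl].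
have [r [h1 h2 h3]] := rat_near _ _ Hq.
move: h1; rewrite hr; last by rewrite h2 h3.
have -> : Defs.coord i (vtx R n) = 0 by rewrite /Defs.coord /=; case: ifP.
by rewrite subr0 ltxx.
Unshelve. all: by end_near. Qed.
Variables (d : measure_display) (Omega : measurableType d) (X : Omega -> R -> Gamma R n).
Hypothesis hm : forall t i, measurable_fun setT (fun w => Defs.coord i (X w t)).
Hypothesis hc : forall w i, {within `[0, +oo[, continuous (fun t => Defs.coord i (X w t))}.
Lemma meas_vtx (t : R) : measurable [set w | X w t = vtx R n].
Proof.
have mh : measurable_fun setT (fun w => \sum_i Defs.coord i (X w t)).
  by apply: measurable_sum => i; exact: hm.
rewrite (_ : [set w | X w t = vtx R n] = (fun w => \sum_i Defs.coord i (X w t)) @^-1` [set 0]).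
  by have := mh measurableT [set 0] (measurable_set1 0); rewrite setTI.
apply/seteqP; split => w /=.
  by move/vtx_coord => H; rewrite big1 // => i _; rewrite H.
move=> H; apply/vtx_coord => i.
have := @psumr_eq0P R _ xpredT (fun j => Defs.coord j (X w t)) (fun j _ => coord_ge0 j (X w t)) H i.
by apply.
Qed.
Definition At (t : R) := [set w | (t%:E < xi_v X w)%E].
Lemma At_eq (t : R) : At t = \bigcup_(k : nat) \bigcap_(r : rat)
   [set w | 0 < (ratr r : R) < t + k.+1%:R^-1 -> X w (ratr r) = vtx R n].
Proof.
rewrite /At; apply/seteqP; split => w /=.
- move=> Hw.
  have [k hk] : exists k : nat, ((t + k.+1%:R^-1)%:E <= xi_v X w)%E.
    move: Hw; case E: (xi_v X w) => [y| |] //=.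
    + rewrite lte_fin => ty; have [k hk] := ltr_add_invr ty.
      by exists k; rewrite lee_fin ltW.
    + by move=> _; exists 0%N; rewrite leey.
  exists k => // r _ hr.
  have [//|hne] := eqVneq (X w (ratr r)) (vtx R n).
  have : (xi_v X w <= (ratr r)%:E)%E.
    apply: ge_ereal_inf; exists (ratr r)%:E => //.
    exists (ratr r) => //; split; [by case/andP: hr|exact/eqP].
  move=> h; have := le_trans hk h; rewrite lee_fin.
  by case/andP: hr => _ h2; rewrite leNgt h2.
- move=> [k _ Hk].
  apply: (lt_le_trans (y := (t + k.+1%:R^-1)%:E)).
    by rewrite lte_fin ltrDl invr_gt0 ltr0n.
  apply/ereal_infP => _ [s [s0 hs] <-].
  rewrite lee_fin leNgt; apply/negP => sq; apply: hs.
  apply: (path_vtx (X w) (t + k.+1%:R^-1) (hc w)); last by rewrite s0 sq.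
  by move=> r hr; apply: Hk.
Qed.
Lemma At_meas (t : R) : measurable (At t).
Proof.
rewrite At_eq; apply: bigcupT_measurable => k.
rewrite -[X in measurable X]setCK setC_bigcap; apply: measurableC.
apply: bigcupT_measurable_rat => r; apply: measurableC.
have [h|h] := boolP (0 < (ratr r : R) < t + k.+1%:R^-1).
  rewrite (_ : [set w | _] = [set w | X w (ratr r) = vtx R n]); first exact: meas_vtx.
  by apply/seteqP; split => w /=; [apply|move=> ->].
rewrite (_ : [set w | _] = setT); first exact: measurableT.
by apply/seteqP; split => w //= _ h'; rewrite h' in h.
Qed.
Lemma At_vtx (t : R) (w : Omega) : 0 < t -> At t w -> X w t = vtx R n.
Proof.
move=> t0 hA; have [//|hne] := eqVneq (X w t) (vtx R n).
have : (xi_v X w <= t%:E)%E.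
  apply: ge_ereal_inf; exists t%:E => //.
  by exists t => //; split; [|exact/eqP].
by rewrite leNgt hA.
Qed.
Lemma fG_vtx : fG (vtx R n) = 0.
Proof. by rewrite /fG /= F0 Csum. Qed.
Lemma integral_fG (P0 : probability Omega R) (t : R) : 0 < t -> P0 (At t) = 1%E ->
  (\int[P0]_w (fG (X w t))%:E = 0)%E.
Proof.
move=> t0 H.
have ae : ae_eq P0 setT (fun w => (fG (X w t))%:E) (cst 0%E).
  exists (~` At t); split.
  - exact/measurableC/At_meas.
  - have := probability_setC P0 (At_meas t). rewrite H subee //.
  - move=> w hw hA; apply: hw => _.
    by rewrite (At_vtx t w t0 hA) fG_vtx.
have mf : measurable_fun setT (fun w => (fG (X w t))%:E).
  by apply/measurable_EFinP; apply: fG_meas => i; exact: hm.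
rewrite (ae_eq_integral _ _ measurableT mf (measurable_cst _) ae).
exact: integral0.
Qed.
Lemma eF (i : 'I_n.+1) (x : R) : 0 < x -> edge fG i x = F (C1 i) (C2 i) (C3 i) 1 2 3 x.
Proof. by move=> hx; rewrite edge_fG hx. Qed.
Lemma e0 (i : 'I_n.+1) : edge fG i 0 = 0.
Proof. by rewrite edge_fG ltxx. Qed.
Lemma edge_Lop (sig b : 'I_n.+1 -> R -> R) (i : 'I_n.+1) (x : R) :
  edge (Lop sig b fG) i x = if 0 < x then Li sig b fG i x else Lop sig b fG (vtx R n).
Proof. rewrite /edge /Lop gpoint_val.
case: (boolP (0 < x)) => hx /=; rewrite ?hx ?ltxx //.
Qed.
Lemma Lop_vtx (sig b : 'I_n.+1 -> R -> R) (s be : 'I_n.+1 -> R) :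
  (forall i, sig i @ 0^'+ --> s i) -> (forall i, b i @ 0^'+ --> be i) ->
  (forall i, 2^-1 * s i ^+ 2 * d2 (C1 i) (C2 i) (C3 i) 0 + be i * d1 (C1 i) (C2 i) (C3 i) 0 = 1) ->
  Lop sig b fG (vtx R n) = 1.
Proof.
move=> hs hb hl; rewrite /Lop /= ltxx.
apply: cvg_lim => //; rewrite -(hl ord0).
exact: (Lg_cvg0 _ _ _ _ (eF ord0) _ _ _ _ (hs ord0) (hb ord0)).
Qed.
Lemma DL_fG (sig b : 'I_n.+1 -> R -> R) (eta : R) (rho : 'I_n.+1 -> R) (s be : 'I_n.+1 -> R) :
  PC sig -> PC b ->
  (forall i, sig i @ 0^'+ --> s i) -> (forall i, b i @ 0^'+ --> be i) ->
  (forall i, 2^-1 * s i ^+ 2 * d2 (C1 i) (C2 i) (C3 i) 0 + be i * d1 (C1 i) (C2 i) (C3 i) 0 = 1) ->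
  (forall i, d1 (C1 i) (C2 i) (C3 i) 0 = eta) -> \sum_i rho i = 1 ->
  DL sig b eta rho fG.
Proof.
move=> Psig Pb hs hb hl hd1 hrho.
split.
- move=> i; exact: (g_C2e _ _ _ _ (eF i) (e0 i) (Csum i)).
- move=> i; split; first exact: (g_within _ _ _ _ (eF i) (e0 i) (Csum i)).
  exact: (g_cvgy _ _ _ _ (eF i)).
- move=> i; have [[M1 hM1] cs _] := Psig i; have [[M2 hM2] cb _] := Pb i.
  split.
  + apply/continuous_within_itvcyP; split.
    * move=> x hx0; have hx : 0 < x by move: hx0; rewrite in_itv /= andbT.
      rewrite /continuous_at edge_Lop hx.
      apply: cvg_trans (Lg_cont _ _ _ _ (eF i) (e0 i) (Csum i) _ _ cs cb x hx0).
      apply: near_eq_cvg; near=> y; rewrite edge_Lop ifT //; near: y; exact: lt_nbhsr.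
    * rewrite edge_Lop ltxx (Lop_vtx _ _ s be hs hb hl) -(hl i).
      apply: cvg_trans (Lg_cvg0 _ _ _ _ (eF i) _ _ _ _ (hs i) (hb i)).
      apply: near_eq_cvg; near=> y; rewrite edge_Lop ifT //; near: y; exact: nbhs_right_gt.
  + apply: (near_y_cvg _ _ _ _ (Lg_cvgy _ _ _ _ (eF i) _ _ M1 M2 hM1 hM2)).
    by move=> y y0; rewrite edge_Lop y0.
- rewrite (Lop_vtx _ _ s be hs hb hl) mulr1.
  under eq_bigr => i _ do rewrite (rderiv0_g _ _ _ _ (eF i) (e0 i) (Csum i)) hd1.
  by rewrite -mulr_suml hrho mul1r.
Unshelve. all: by end_near. Qed.
End G.
End Aux.

Theorem proposition3p2 (R : realType) (n : nat)
  (sig b : 'I_n.+1 -> R -> R) (sig0 eta : R) (rho : 'I_n.+1 -> R)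
  (d : measure_display) (Omega : measurableType d)
  (P : Gamma R n -> probability Omega R) (X : Omega -> R -> Gamma R n) :
  PC sig -> PC b -> 0 < sig0 -> (forall i x, 0 < x -> sig0 < sig i x) ->
  0 <= eta -> (forall i, 0 < rho i) -> \sum_i rho i = 1 ->
  generated_process sig b eta rho P X ->
  ~ (forall t : R, 0 < t ->
       P (vtx R n) [set w | (t%:E < xi_v X w)%E] = 1%E).
Proof.
move=> Psig Pb sig0_gt0 hsig eta0 rho_gt0 hrho [[hm hc _ _] [_ _ [_ hgenL]]] trap.
pose s i := lim (sig i @ (0:R)^'+).
pose be i := lim (b i @ (0:R)^'+).
have hs : forall i, sig i @ 0^'+ --> s i by move=> i; have [_ _ ?] := Psig i.
have hb : forall i, b i @ 0^'+ --> be i by move=> i; have [_ _ ?] := Pb i.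
have s_gt0 : forall i, 0 < s i.
  move=> i; apply: lt_le_trans sig0_gt0 _; apply: limr_ge; first exact: hs.
  near=> y; apply/ltW/hsig; near: y; exact: nbhs_right_gt.
pose K i := 2 * (1 - be i * eta) / s i ^+ 2.
pose C1 i := (K i + 6 * eta) / 2.
pose C2 i := - K i - 5 * eta.
pose C3 i := (K i + 4 * eta) / 2.
have Csum : forall i, C1 i + (C2 i + C3 i) = 0.
  by move=> i; rewrite /C1 /C2 /C3; field.
have hd1 : forall i, @d1 R (C1 i) (C2 i) (C3 i) 0 = eta.
  by move=> i; rewrite /d1 F0 /dc /C1 /C2 /C3; field.
have hl : forall i, 2^-1 * s i ^+ 2 * @d2 R (C1 i) (C2 i) (C3 i) 0 + be i * @d1 R (C1 i) (C2 i) (C3 i) 0 = 1.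
  move=> i; rewrite hd1 /d2 F0 /dc /C1 /C2 /C3 /K.
  have := s_gt0 i; rewrite lt0r => /andP[si _].
  by field.
have DLf := DL_fG R n C1 C2 C3 Csum sig b eta rho s be Psig Pb hs hb hl hd1 hrho.
have G := hgenL _ DLf.
have h2 : (0:R) < 2^-1 by rewrite invr_gt0 ltr0n.
have Hn := G _ h2.
have : \forall t \near (0:R)^'+, 0 < t /\ forall p, `|(Tsg P X t (fG R n C1 C2 C3) p - fG R n C1 C2 C3 p) / t - Lop sig b (fG R n C1 C2 C3) p| < 2^-1.
  near=> t; split; [near: t; exact: nbhs_right_gt|near: t; exact: Hn].
move=> /filter_ex [t [t0 Ht]].
have := Ht (vtx R n).
rewrite /Tsg (integral_fG R n C1 C2 C3 Csum d Omega X hm hc (P (vtx R n)) t t0 (trap t t0)).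
rewrite (fG_vtx R n C1 C2 C3 Csum) (Lop_vtx R n C1 C2 C3 Csum sig b s be hs hb hl) /=.
rewrite subr0 mul0r sub0r normrN normr1.
apply/negP; rewrite -leNgt invf_le1 // ler1n.
Unshelve. all: by end_near. Qed.
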